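(* $3/5<\hat q^2<2/3$.
   Context: For $q\in[0,1)$, $\mathrm{K}(q)=\int_0^{\pi/2}(1-q^2\sin^2\theta)^{-1/2}\,d\theta$ and $\mathrm{E}(q)=\int_0^{\pi/2}(1-q^2\sin^2\theta)^{1/2}\,d\theta$. $\hat q$ is the unique zero in $[1/\sqrt2,1)$ of $f(q)=(4q^4-5q^2+1)\mathrm{K}(q)+(-8q^4+8q^2-1)\mathrm{E}(q)$; moreover $f>0$ on $[1/\sqrt2,\hat q)$ and $f<0$ on $(\hat q,1)$. *)

(* Defs.v *)
From Stdlib Require Import Reals Lra.
From Coquelicot Require Import Coquelicot.
Open Scope R_scope.

Definition ellK (q : R) : R :=
  RInt (fun t => / sqrt (1 - q ^ 2 * (sin t) ^ 2)) 0 (PI / 2).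
Definition ellE (q : R) : R :=
  RInt (fun t => sqrt (1 - q ^ 2 * (sin t) ^ 2)) 0 (PI / 2).

Definition fq (q : R) : R :=
  (4 * q ^ 4 - 5 * q ^ 2 + 1) * ellK q + (- 8 * q ^ 4 + 8 * q ^ 2 - 1) * ellE q.

(* Main.v *)
Require Import Defs.
From Stdlib Require Import Reals Lra Psatz.
From Coquelicot Require Import Coquelicot.
Open Scope R_scope.

Lemma sin2_bd t : 0 <= sin t ^ 2 <= 1.
Proof. pose proof (sin2_cos2 t). unfold Rsqr in H. split; nra. Qed.

Lemma PI2_pos : 0 <= PI/2. Proof. pose proof PI_RGT_0. lra. Qed.

Lemma mm_pos m t : 0 <= m < 1 -> 0 < 1 - m * sin t ^ 2.
Proof. intros. pose proof (sin2_bd t). nra. Qed.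

Lemma int_lin A B :
  RInt (fun t => A + B * sin t ^ 2) 0 (PI/2) = A*(PI/2) + B*(PI/4).
Proof.
  apply is_RInt_unique.
  pose (F := fun t => A*t + B*(t/2 - sin t * cos t / 2)).
  assert (HF : A*(PI/2) + B*(PI/4) = minus (F (PI/2)) (F 0)).
  { unfold F. rewrite sin_PI2, cos_PI2, sin_0, cos_0. unfold minus, plus, opp; simpl. field. }
  rewrite HF. apply (is_RInt_derive F).
  - intros x _. unfold F. auto_derive; auto. pose proof (sin2_cos2 x) as H. unfold Rsqr in H. replace (1 * cos x * cos x) with (1 - sin x * sin x) by lra. simpl. field.
  - intros x _. apply (ex_derive_continuous (fun t => A + B * sin t ^ 2)). auto_derive. auto.
Qed.

Lemma ex_lin A B : ex_RInt (fun t => A + B * sin t ^ 2) 0 (PI/2).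
Proof. apply (ex_RInt_continuous (V:=R_CompleteNormedModule)). intros z _. apply (ex_derive_continuous (V:=R_NormedModule)). auto_derive. auto. Qed.

Lemma ex_sq m : 0 <= m < 1 -> ex_RInt (fun t => sqrt (1 - m * sin t ^ 2)) 0 (PI/2).
Proof. intros Hm. apply (ex_RInt_continuous (V:=R_CompleteNormedModule)). intros z _. apply (ex_derive_continuous (V:=R_NormedModule)).
  auto_derive. apply (mm_pos m z Hm). Qed.

Lemma ex_isq m : 0 <= m < 1 -> ex_RInt (fun t => / sqrt (1 - m * sin t ^ 2)) 0 (PI/2).
Proof. intros Hm. apply (ex_RInt_continuous (V:=R_CompleteNormedModule)). intros z _. apply (ex_derive_continuous (V:=R_NormedModule)).
  pose proof (mm_pos m z Hm). pose proof (sqrt_lt_R0 _ H).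
  auto_derive. replace (1 + - (m * (sin z * (sin z * 1)))) with (1 - m * sin z ^ 2) by ring. split; [lra|split; [lra|exact I]]. Qed.
Lemma p1 x : 0<=x<=1 -> 1 <= (1 + 291/500*x)^2*(1-3/5*x).
Proof. intros. assert (0 <= x*(1-x)) by nra. assert (0 <= x*x*(1-x)) by nra. assert (0<=x*x) by nra. nra. Qed.
Lemma p2 x : 0<=x<=1 -> (1 + -46/125*x)^2 <= 1-3/5*x.
Proof. intros. assert (0 <= x*(1-x)) by nra. assert (0 <= x*x*(1-x)) by nra. assert (0<=x*x) by nra. nra. Qed.
Lemma p3 x : 0<=x<=1 -> (9/10 + 6/10*x)^2*(1-2/3*x) <= 1.
Proof. intros. assert (0 <= x*(x-3/4)^2) by (apply Rmult_le_pos; [lra|apply pow2_ge_0]). assert (0 <= (x - 15/32)^2) by apply pow2_ge_0. nra. Qed.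
Lemma p4 x : 0<=x<=1 -> 1-2/3*x <= (1025/1000 + -41/100*x)^2.
Proof. intros. assert (0 <= (x - 1/2)^2) by apply pow2_ge_0. nra. Qed.

Lemma E_lo m A B : 0<=m<1 -> (forall x, 0<=x<=1 -> (A+B*x)^2 <= 1-m*x) ->
  A*(PI/2)+B*(PI/4) <= RInt (fun t => sqrt(1 - m*sin t^2)) 0 (PI/2).
Proof. intros Hm Hb. rewrite <- int_lin. apply RInt_le; [apply PI2_pos|apply ex_lin|apply ex_sq; auto|].
  intros t _. pose proof (sin2_bd t). pose proof (mm_pos m t Hm).
  pose proof (sqrt_pos (1 - m*sin t^2)). pose proof (sqrt_sqrt (1 - m*sin t^2) ltac:(lra)).
  specialize (Hb _ H). nra. Qed.

Lemma E_hi m A B : 0<=m<1 -> (forall x, 0<=x<=1 -> 0 <= A+B*x /\ 1-m*x <= (A+B*x)^2) ->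
  RInt (fun t => sqrt(1 - m*sin t^2)) 0 (PI/2) <= A*(PI/2)+B*(PI/4).
Proof. intros Hm Hb. rewrite <- int_lin. apply RInt_le; [apply PI2_pos|apply ex_sq; auto|apply ex_lin|].
  intros t _. pose proof (sin2_bd t). pose proof (mm_pos m t Hm).
  pose proof (sqrt_pos (1 - m*sin t^2)). pose proof (sqrt_sqrt (1 - m*sin t^2) ltac:(lra)).
  specialize (Hb _ H). nra. Qed.

Lemma K_hi m A B : 0<=m<1 -> (forall x, 0<=x<=1 -> 0 < A+B*x /\ 1 <= (A+B*x)^2*(1-m*x)) ->
  RInt (fun t => / sqrt(1 - m*sin t^2)) 0 (PI/2) <= A*(PI/2)+B*(PI/4).
Proof. intros Hm Hb. rewrite <- int_lin. apply RInt_le; [apply PI2_pos|apply ex_isq; auto|apply ex_lin|].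
  intros t _. pose proof (sin2_bd t). pose proof (mm_pos m t Hm).
  pose proof (sqrt_lt_R0 _ H0). pose proof (sqrt_sqrt (1 - m*sin t^2) ltac:(lra)).
  specialize (Hb _ H). set (s := sqrt (1 - m * sin t ^ 2)) in *. set (M := A + B * sin t ^2) in *.
  destruct Hb as [HM1 HM2].
  assert (HMs : 1 <= (M*s)*(M*s)) by (replace ((M*s)*(M*s)) with (M^2*(s*s)) by ring; rewrite H2; lra).
  assert (0 < M*s) by (apply Rmult_lt_0_compat; lra).
  assert (1 <= M * s) by nra.
  apply (Rmult_le_reg_r s); auto. rewrite Rinv_l; lra. Qed.

Lemma K_lo m A B : 0<=m<1 -> (forall x, 0<=x<=1 -> 0 <= A+B*x /\ (A+B*x)^2*(1-m*x) <= 1) ->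
  A*(PI/2)+B*(PI/4) <= RInt (fun t => / sqrt(1 - m*sin t^2)) 0 (PI/2).
Proof. intros Hm Hb. rewrite <- int_lin. apply RInt_le; [apply PI2_pos|apply ex_lin|apply ex_isq; auto|].
  intros t _. pose proof (sin2_bd t). pose proof (mm_pos m t Hm).
  pose proof (sqrt_lt_R0 _ H0). pose proof (sqrt_sqrt (1 - m*sin t^2) ltac:(lra)).
  specialize (Hb _ H). set (s := sqrt (1 - m * sin t ^ 2)) in *. set (M := A + B * sin t ^2) in *.
  destruct Hb as [HM1 HM2].
  assert (HMs : (M*s)*(M*s) <= 1) by (replace ((M*s)*(M*s)) with (M^2*(s*s)) by ring; rewrite H2; lra).
  assert (0 <= M*s) by (apply Rmult_le_pos; lra).
  assert (M * s <= 1) by nra.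
  apply (Rmult_le_reg_r s); auto. rewrite Rinv_l; lra. Qed.

Lemma fq_sq q m : q^2 = m -> fq q =
  (4 * m ^ 2 - 5 * m + 1) * RInt (fun t => / sqrt(1 - m*sin t^2)) 0 (PI/2)
  + (- 8 * m ^ 2 + 8 * m - 1) * RInt (fun t => sqrt(1 - m*sin t^2)) 0 (PI/2).
Proof. intros H. unfold fq, ellK, ellE. replace (q^4) with ((q^2)^2) by ring. rewrite H. reflexivity. Qed.

Lemma fq1 : 0 < fq (sqrt (3/5)).
Proof.
  rewrite (fq_sq _ (3/5)) by (apply pow2_sqrt; lra).
  assert (Hm : 0 <= 3/5 < 1) by lra.
  pose proof (K_hi _ 1 (291/500) Hm ltac:(intros x Hx; split; [nra|apply p1; auto])).
  pose proof (E_lo _ 1 (-46/125) Hm ltac:(intros x Hx; apply p2; auto)).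
  pose proof PI_RGT_0. nra.
Qed.

Lemma fq2 : fq (sqrt (2/3)) < 0.
Proof.
  rewrite (fq_sq _ (2/3)) by (apply pow2_sqrt; lra).
  assert (Hm : 0 <= 2/3 < 1) by lra.
  pose proof (K_lo _ (9/10) (6/10) Hm ltac:(intros x Hx; split; [nra|apply p3; auto])).
  pose proof (E_hi _ (1025/1000) (-41/100) Hm ltac:(intros x Hx; split; [nra|apply p4; auto])).
  pose proof PI_RGT_0. nra.
Qed.

Theorem lemma2p5 (qh : R) :
  / sqrt 2 <= qh < 1 ->
  fq qh = 0 ->
  (forall q, / sqrt 2 <= q < qh -> 0 < fq q) ->
  (forall q, qh < q < 1 -> fq q < 0) ->
  3 / 5 < qh ^ 2 < 2 / 3.
Proof.
  intros [H1 H2] H0 Hlt Hgt.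
  assert (Hs2 : 0 < / sqrt 2) by (apply Rinv_0_lt_compat, sqrt_lt_R0; lra).
  assert (Hq1 : sqrt (3/5) ^ 2 = 3/5) by (apply pow2_sqrt; lra).
  assert (Hq2 : sqrt (2/3) ^ 2 = 2/3) by (apply pow2_sqrt; lra).
  assert (P1 : 0 <= sqrt (3/5)) by apply sqrt_pos.
  assert (P2 : 0 <= sqrt (2/3)) by apply sqrt_pos.
  assert (Hi2 : (/ sqrt 2) ^ 2 = 1/2).
  { rewrite pow_inv, pow2_sqrt by lra. field. }
  pose proof fq1. pose proof fq2.
  split.
  - destruct (Rlt_or_le (3/5) (qh^2)) as [h|h]; auto. exfalso.
    destruct (Rle_lt_or_eq_dec qh (sqrt (3/5))) as [h'|h'].
    + nra.
    + assert (fq (sqrt (3/5)) < 0) by (apply Hgt; split; nra). lra.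
    + subst qh. lra.
  - destruct (Rlt_or_le (qh^2) (2/3)) as [h|h]; auto. exfalso.
    destruct (Rle_lt_or_eq_dec (sqrt (2/3)) qh) as [h'|h'].
    + nra.
    + assert (0 < fq (sqrt (2/3))) by (apply Hlt; split; nra). lra.
    + rewrite <- h' in H0. lra.
Qed.
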